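(* Let $k,\ell\ge1$, $\delta\in(0,1)$. Let $T^{hh}_{k,\ell}$ be the tree obtained from disjoint stars $S_k$ (hub $h_k$, leaves including $a$) and $S_\ell$ (hub $h_\ell$, leaves including $b$) by adding the edge $\{h_k,h_\ell\}$, with $\mathcal H$ its edge set and vertex set $V$. Let $S_m$, $m=k+\ell+1$, be a star with hub $h_m$, leaf $c$, $\mathcal H$ its edge set. Then the bargaining-power components (computed on the whole vertex sets) are $$b^{h_k}_{h_\ell}=\delta+\tfrac23(k+\ell)\delta^2+\tfrac{k\ell}{2}\delta^3\ \text{in }T^{hh}_{k,\ell},\qquad b^{h_m}_{c}=\delta+\tfrac23(k+\ell)\delta^2\ \text{in }S_m,$$ $$b^{h_k}_{a}=\delta+\tfrac{2k}{3}\delta^2+\tfrac{\ell}{2}\delta^3\ \text{in }T^{hh}_{k,\ell},\qquad b^{a}_{b}=\tfrac12\delta^3\ \text{in }T^{hh}_{k,\ell}.$$ In particular $b^{h_k}_{h_\ell}>b^{h_m}_c$, and $b^a_b<b^{h_k}_a$, $b^a_b<b^{h_k}_{h_\ell}$; so in private two-person conferences (no witnesses, $b_{\mathrm{eff}}=b^S_R$) the leaf–leaf conversation $\{a,b\}$ has weakly the most equilibrium partitions.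
   Context: For a finite simple undirected graph $G=(V,E)$ and $\delta\in(0,1)$: $v^G(S):=\sum_{i\in S}\sum_{j\in S,\,j\neq i}\delta^{t_{ij}(G[S])}$ for $S\subseteq V$, where $t_{ij}(G[S])$ is the distance in the induced subgraph ($\infty$ if disconnected, $\delta^\infty:=0$). For a conference structure $\mathcal H$ and $C\subseteq V$, $C/\mathcal H$ is the partition of $C$ into classes connected via chains of pairwise-intersecting members of $\mathcal H$ contained in $C$; $r^{v^G}_{\mathcal H}(C):=\sum_{B\in C/\mathcal H}v^G(B)$; for $X\subseteq V$, $\mathcal H|_X:=\{H\in\mathcal H:H\subseteq X\}$. $\mu_j(X;u)$ denotes the Shapley value of player $j$ in the TU game $u$ on player set $X$. Bargaining-power components: $b^j_i:=\mu_j(V;r^{v^G}_{\mathcal H})-\mu_j(V\setminus\{i\};r^{v^G}_{\mathcal H|_{V\setminus\{i\}}})$. For $b>0$, $N(b)$ denotes the unique integer $N\ge1$ with $\beta(N)\le b<\beta(N-1)$, where $\beta(N)=\frac1{2N(N+1)}$ and $\beta(0)=+\infty$; $N$ is non-increasing in $b$. *)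

(* Defs.v *)
From mathcomp Require Import all_boot all_order all_algebra.
Set Implicit Arguments. Unset Strict Implicit. Unset Printing Implicit Defensive.
Import Order.TTheory GRing.Theory Num.Theory.
Local Open Scope ring_scope.

Section Generic.
Variables (T : finType) (R : realFieldType).

(* G is given by an (intended symmetric, irreflexive) edge relation e. *)
Definition indrel (e : rel T) (S : {set T}) : rel T :=
  fun x y => [&& e x y, x \in S & y \in S].

Definition walkn (e : rel T) (S : {set T}) (i j : T) (n : nat) : bool :=
  [exists t : n.-tuple T, path (indrel e S) i t && (last i t == j)].

Lemma connect_walkn (e : rel T) (S : {set T}) (i j : T) :
  connect (indrel e S) i j -> exists n, walkn e S i j n.
Proof.
move=> /connectP [p pth ->]; exists (size p).
by apply/existsP; exists (in_tuple p); rewrite /= pth eqxx.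
Qed.

(* t_ij(G[S]) : Some d = the distance d, None = infinity (disconnected) *)
Definition dist (e : rel T) (S : {set T}) (i j : T) : option nat :=
  match connect (indrel e S) i j as b
        return connect (indrel e S) i j = b -> option nat with
  | true => fun h => Some (ex_minn (connect_walkn h))
  | false => fun _ => None
  end (erefl _).

Definition dpow (delta : R) (t : option nat) : R :=
  if t is Some d then delta ^+ d else 0.

Definition vG (e : rel T) (delta : R) (S : {set T}) : R :=
  \sum_(i in S) \sum_(j in S | j != i) dpow delta (dist e S i j).

Definition confin (Hs : {set {set T}}) (C : {set T}) : {set {set T}} :=
  [set H in Hs | H \subset C].

Definition overlap (Hs : {set {set T}}) (C : {set T}) : rel {set T} :=
  fun A B => [&& A \in confin Hs C, B \in confin Hs C & A :&: B != set0].

Definition linked (Hs : {set {set T}}) (C : {set T}) : rel T :=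
  fun i j => (i == j) ||
    [exists H1 in confin Hs C, exists H2 in confin Hs C,
       [&& i \in H1, j \in H2 & connect (overlap Hs C) H1 H2]].

Definition classes (Hs : {set {set T}}) (C : {set T}) : {set {set T}} :=
  equivalence_partition (linked Hs C) C.

Definition rgame (e : rel T) (delta : R) (Hs : {set {set T}}) (C : {set T}) : R :=
  \sum_(B in classes Hs C) vG e delta B.

Definition restr (Hs : {set {set T}}) (X : {set T}) : {set {set T}} :=
  [set H in Hs | H \subset X].

Definition shapley (X : {set T}) (u : {set T} -> R) (j : T) : R :=
  \sum_(S in powerset (X :\ j))
     ((#|S|)`!%:R * (#|X| - #|S| - 1)`!%:R / (#|X|)`!%:R) * (u (j |: S) - u S).

Definition bpc (e : rel T) (delta : R) (Hs : {set {set T}}) (j i : T) : R :=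
  shapley [set: T] (rgame e delta Hs) j
  - shapley ([set: T] :\ i) (rgame e delta (restr Hs ([set: T] :\ i))) j.

Definition edgeset (e : rel T) : {set {set T}} :=
  [set [set p.1; p.2] | p in [set p : T * T | e p.1 p.2]].

End Generic.

Definition betaN (R : realFieldType) (N : nat) : R := (2 * N * N.+1)%:R^-1.

(* isN b N  <->  N = N(b): N >= 1, beta(N) <= b < beta(N-1), beta(0) = +oo *)
Definition isN (R : realFieldType) (b : R) (N : nat) : Prop :=
  (1 <= N)%N /\ betaN R N <= b /\ (N = 1%N \/ b < betaN R N.-1).

(* T^{hh}_{k,l}: vertices (option 'I_k + option 'I_l); inl None = h_k,
   inr None = h_l, inl (Some _) the leaves of S_k, inr (Some _) those of S_l *)
Definition treeV (k l : nat) : finType := (option 'I_k + option 'I_l)%type.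

Definition treeE (k l : nat) : rel (treeV k l) :=
  fun x y => match x, y with
  | inl None, inl (Some _) | inl (Some _), inl None => true
  | inr None, inr (Some _) | inr (Some _), inr None => true
  | inl None, inr None | inr None, inl None => true
  | _, _ => false
  end.

(* star S_m: vertices option 'I_m, hub None, leaves Some _ *)
Definition starV (m : nat) : finType := option 'I_m.

Definition starE (m : nat) : rel (starV m) :=
  fun x y => match x, y with
  | None, Some _ | Some _, None => true
  | _, _ => false
  end.

Arguments treeE : clear implicits.
Arguments starE : clear implicits.

(* Main.v *)
Require Import Defs.
From mathcomp Require Import all_boot all_order all_algebra.
From mathcomp Require Import zify ring lra.
Set Implicit Arguments. Unset Strict Implicit. Unset Printing Implicit Defensive.
Import Order.TTheory GRing.Theory Num.Theory.
Local Open Scope ring_scope.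

Lemma big_option (R : Type) (idx : R) (op : Monoid.com_law idx) (I : finType) (F : option I -> R) :
  \big[op/idx]_(i : option I) F i = op (F None) (\big[op/idx]_(i : I) F (Some i)).
Proof.
by rewrite ![index_enum _]unlock [@Finite.enum in LHS]unlock /= big_cons big_map.
Qed.

Section Dist.
Variables (T : finType) (e : rel T).

Lemma walkn_connect S i j n : walkn e S i j n -> connect (indrel e S) i j.
Proof. by case/existsP=> t /andP[p /eqP <-]; apply/connectP; exists t. Qed.

Lemma dist_some S i j d : walkn e S i j d -> (forall n, walkn e S i j n -> (d <= n)%N) ->
  dist e S i j = Some d.
Proof.
move=> Hd Hmin; rewrite /dist; generalize (erefl (connect (indrel e S) i j)).
case: {2 3}(connect (indrel e S) i j) => h.
  case: ex_minnP => m Hm Hm'; congr Some; apply/eqP; rewrite eqn_leq.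
  by rewrite Hm' // Hmin.
by rewrite (walkn_connect Hd) in h.
Qed.

Lemma dist_none S i j : (forall n, ~~ walkn e S i j n) -> dist e S i j = None.
Proof.
move=> Hn; rewrite /dist; generalize (erefl (connect (indrel e S) i j)).
case: {2 3}(connect (indrel e S) i j) => h //.
by case: (connect_walkn (e:=e) h) => n Hw; move: (Hn n); rewrite Hw.
Qed.

Lemma dist_eq S S' i j : (forall n, walkn e S i j n = walkn e S' i j n) ->
  dist e S i j = dist e S' i j.
Proof.
move=> H; case: (boolP (connect (indrel e S) i j)) => hc.
  have [n Hn] := connect_walkn hc.
  case: (ex_minnP (ex_intro _ n Hn)) => m Hm Hm'.
  rewrite (dist_some Hm Hm') (@dist_some S' i j m) // -?H // => p; rewrite -H; exact: Hm'.
have Hn : forall n, ~~ walkn e S i j n.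
  by move=> n; apply/negP => /walkn_connect; apply/negP.
by rewrite !dist_none // => n; rewrite -?H.
Qed.
End Dist.

Section Game.
Variables (T : finType) (R : realFieldType) (e : rel T) (delta : R).

Lemma overlap_sym (Hs : {set {set T}}) (C : {set T}) : symmetric (overlap Hs C).
Proof. by move=> A B; rewrite /overlap andbCA setIC. Qed.

Lemma linked_sym (Hs : {set {set T}}) (C : {set T}) (i j : T) : linked Hs C i j -> linked Hs C j i.
Proof.
rewrite /linked eq_sym; case/orP=> [->//|/existsP[H1 /andP[H1i /existsP[H2 /andP[H2i]]]]].
case/and3P=> iH1 jH2 cH; apply/orP; right; apply/existsP; exists H2; rewrite H2i /=.
apply/existsP; exists H1; rewrite H1i jH2 iH1 /=.
by rewrite (sym_connect_sym (overlap_sym Hs C)).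
Qed.

Lemma linked_trans (Hs : {set {set T}}) (C : {set T}) (i j k : T) : linked Hs C i j -> linked Hs C j k -> linked Hs C i k.
Proof.
rewrite /linked; case/orP=> [/eqP->//|/existsP[H1 /andP[H1i /existsP[H2 /andP[H2i]]]]].
case/and3P=> iH1 jH2 cH12; case/orP=> [/eqP<-|]; first by apply/orP; right;
  apply/existsP; exists H1; rewrite H1i; apply/existsP; exists H2; rewrite H2i iH1 jH2.
case/existsP=> H3 /andP[H3i /existsP[H4 /andP[H4i]]] /and3P[jH3 kH4 cH34].
apply/orP; right; apply/existsP; exists H1; rewrite H1i; apply/existsP; exists H4.
rewrite H4i iH1 kH4 /=; apply: connect_trans cH12 _; apply: connect_trans cH34.
apply: connect1; rewrite /overlap H2i H3i /=; apply/set0Pn; exists j; rewrite inE jH2.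
exact: jH3.
Qed.

Lemma linked_equiv (Hs : {set {set T}}) (C : {set T}) : {in C & &, equivalence_rel (linked Hs C)}.
Proof.
move=> x y z _ _ _; split; first by rewrite /linked eqxx.
move=> hxy; apply/idP/idP => h; first exact: linked_trans (linked_sym hxy) h.
exact: linked_trans hxy h.
Qed.


Section Blocks.
Variables (Hs : {set {set T}}) (C : {set T}).
Hypothesis Hedge : forall u w, u \in C -> w \in C -> e u w -> linked Hs C u w.

Lemma block_mem B u w : B \in classes Hs C -> u \in B -> w \in C ->
  (w \in B) = linked Hs C u w.
Proof.
case/imsetP=> x xC -> ; rewrite !inE => /andP[uC lxu] wC.
rewrite wC /=; apply/idP/idP => h.
  exact: linked_trans (linked_sym lxu) h.
exact: linked_trans lxu h.
Qed.

Lemma block_sub B : B \in classes Hs C -> B \subset C.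
Proof. by case/imsetP=> x xC ->; apply/subsetP=> y; rewrite inE => /andP[]. Qed.

Lemma path_block B i t : B \in classes Hs C -> i \in B ->
  path (indrel e C) i t -> path (indrel e B) i t && (last i t \in B).
Proof.
move=> PB; elim: t i => [|x t IH] i iB /=; first by rewrite iB.
case/andP=> /and3P[eix iC xC] pt.
have xB : x \in B by rewrite (block_mem PB iB xC) Hedge.
by rewrite /indrel eix iB xB /= IH.
Qed.

Lemma walkn_block B i j n : B \in classes Hs C -> i \in B -> j \in B ->
  walkn e C i j n = walkn e B i j n.
Proof.
move=> PB iB jB; apply: eq_existsb => t; apply: andb_id2r => _.
apply/idP/idP => h; first by case/andP: (path_block PB iB h).
apply: sub_path h => x y /and3P[exy xB yB].
by rewrite /indrel exy (subsetP (block_sub PB)) // (subsetP (block_sub PB)).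
Qed.

Lemma walkn_out B i j n : B \in classes Hs C -> i \in B -> j \notin B ->
  walkn e C i j n = false.
Proof.
move=> PB iB jB; apply/negbTE; rewrite /walkn; apply/negP; case/existsP => t /andP[p /eqP lt].
case/andP: (path_block PB iB p) => _; rewrite lt; exact/negP.
Qed.

Lemma rgame_vG : rgame e delta Hs C = vG e delta C.
Proof.
have Pp := equivalence_partitionP (linked_equiv Hs (C:=C)).
rewrite /rgame /vG (set_partition_big _ Pp); apply: eq_bigr => B PB.
apply: eq_bigr => i iB.
rewrite big_mkcond [RHS]big_mkcond; apply: eq_bigr => j _.
case: (boolP (j \in B)) => jB.
  rewrite (subsetP (block_sub PB)) //=; case: (j != i) => //.
  by congr (dpow _ _); apply: dist_eq => n; rewrite (walkn_block _ PB).
case: (boolP (j \in C)) => //= jC; case: (j != i) => //.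
by rewrite dist_none // => n; rewrite (walkn_out _ PB).
Qed.
End Blocks.
End Game.

Section Shap.
Variables (T : finType) (R : realFieldType).

Definition unan (P : {set T}) : {set T} -> R := fun S => (P \subset S)%:R.

Lemma shapley_ext (X : {set T}) (u u' : {set T} -> R) j : j \in X ->
  (forall S : {set T}, S \subset X -> u S = u' S) -> shapley X u j = shapley X u' j.
Proof.
move=> jX H; rewrite /shapley; apply: eq_bigr => S; rewrite powersetE => SX.
have SX' : S \subset X by apply: subset_trans SX (subD1set _ _).
rewrite !H //; apply/subsetP=> x; rewrite !inE => /orP[/eqP->//|]; exact: (subsetP SX').
Qed.

Lemma shapley_sum (X : {set T}) (I : finType) (Q : pred I) (g : I -> {set T} -> R) j :
  shapley X (fun S => \sum_(p | Q p) g p S) j = \sum_(p | Q p) shapley X (g p) j.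
Proof.
rewrite /shapley exchange_big /=; apply: eq_bigr => S _.
by rewrite -sumrB mulr_sumr.
Qed.

Lemma shapley_scale (X : {set T}) c (u : {set T} -> R) j :
  shapley X (fun S => c * u S) j = c * shapley X u j.
Proof.
rewrite /shapley mulr_sumr; apply: eq_bigr => S _.
by rewrite -mulrBr mulrCA.
Qed.

Lemma shapley_null (X : {set T}) (u : {set T} -> R) j :
  (forall S, u (j |: S) = u S) -> shapley X u j = 0.
Proof. by move=> H; rewrite /shapley; apply: big1 => S _; rewrite H subrr mulr0. Qed.

Lemma shapley_unan_out (X P : {set T}) j : j \in X -> ~~ (P \subset X) ->
  shapley X (unan P) j = 0.
Proof.
move=> jX PX; rewrite /shapley; apply: big1 => S; rewrite powersetE => SX.
have SX' : S \subset X by apply: subset_trans SX (subD1set _ _).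
have jSX : j |: S \subset X.
  by apply/subsetP=> x; rewrite !inE => /orP[/eqP->//|]; exact: (subsetP SX').
have h1 : (P \subset j |: S) = false.
  by apply/negbTE; apply: contra PX => h; exact: subset_trans h jSX.
have h2 : (P \subset S) = false.
  by apply/negbTE; apply: contra PX => h; exact: subset_trans h SX'.
by rewrite /unan h1 h2 subrr mulr0.
Qed.

Lemma unan_null (P : {set T}) z S : z \notin P -> unan P (z |: S) = unan P S.
Proof.
move=> zP; rewrite /unan; suff -> : (P \subset z |: S) = (P \subset S) by []; apply/idP/idP => h.
  apply/subsetP=> x xP; move: (subsetP h x xP); rewrite !inE; case/orP=> [/eqP xz|//].
  by move: zP; rewrite -xz xP.
exact: subset_trans h (subsetUr _ _).
Qed.

Lemma powerset_split (A : {set T}) z (F : {set T} -> R) : z \in A ->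
  \sum_(S in powerset A) F S =
  \sum_(S in powerset (A :\ z)) F S + \sum_(S in powerset (A :\ z)) F (z |: S).
Proof.
move=> zA; rewrite (bigID (fun S : {set T} => z \in S)) /= addrC; congr (_ + _).
  apply: eq_bigl => S; rewrite !powersetE subsetD1; by case: (z \in S); rewrite ?andbF ?andbT.
rewrite (reindex_onto (fun S => z |: S) (fun S => S :\ z)) /=.
  apply: eq_bigl => S; rewrite !powersetE setU11 andbT subsetD1 subUset sub1set zA /=.
  have -> : (z |: S) :\ z = S :\ z by apply/setP=> x; rewrite !inE; case: (x == z).
  suff -> : (S :\ z == S) = (z \notin S) by [].
  apply/eqP/idP => [h|zS]; first by rewrite -h !inE eqxx.
  by apply/setP => x; rewrite !inE; case: eqP => // ->; rewrite (negbTE zS).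
by move=> S /andP[_ zS]; rewrite setD1K.
Qed.

Definition wgt (n s : nat) : R := (s`!)%:R * ((n - s - 1)`!)%:R / (n`!)%:R.

Lemma wgt_id s r : wgt (s + r + 2) s + wgt (s + r + 2) s.+1 = wgt (s + r + 1) s.
Proof.
rewrite /wgt.
have -> : (s + r + 2 - s - 1 = r.+1)%N by lia.
have -> : (s + r + 2 - s.+1 - 1 = r)%N by lia.
have -> : (s + r + 1 - s - 1 = r)%N by lia.
have -> : (s + r + 2 = (s + r + 1).+1)%N by lia.
rewrite (factS (s + r + 1)) (factS s) (factS r) !natrM.
have e : (r.+1)%:R + (s.+1)%:R = (s + r + 1).+1%:R :> R.
  by rewrite -natrD; congr _%:R; lia.
have hc : ((s + r + 1)`!)%:R != 0 :> R by rewrite pnatr_eq0 -lt0n fact_gt0.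
have hy : (s + r + 1).+1%:R != 0 :> R by rewrite pnatr_eq0.
move: e hc hy.
move: ((s + r + 1)`!)%:R ((s + r + 1).+1)%:R (r.+1)%:R (s.+1)%:R (s`!)%:R (r`!)%:R.
move=> c y x z a b <- hc hy.
field; by rewrite ?hc ?hy.
Qed.

Lemma shapley_remove (X : {set T}) (u : {set T} -> R) j z : j \in X -> z \in X -> z != j ->
  (forall S, u (z |: S) = u S) -> shapley X u j = shapley (X :\ z) u j.
Proof.
move=> jX zX zj H.
rewrite /shapley (@powerset_split (X :\ j) z); last by rewrite !inE zj zX.
have eA : (X :\ j) :\ z = (X :\ z) :\ j.
  by apply/setP=> x; rewrite !inE; case: (x == z); case: (x == j).
rewrite eA -big_split /=; apply: eq_bigr => S; rewrite powersetE => SA.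
have zS : z \notin S.
  by apply/negP=> zS; move: (subsetP SA z zS); rewrite !inE eqxx andbF.
rewrite cardsU1 zS setUCA !H -mulrDl; congr (_ * _).
have hc1 : #|X| = (#|X :\ z|).+1 by rewrite (cardsD1 z X) zX.
have jXz : j \in X :\ z.
  by rewrite !inE eq_sym zj.
have hc2 : #|X :\ z| = (#|(X :\ z) :\ j|).+1 by rewrite (cardsD1 j (X :\ z)) jXz.
have hs := subset_leq_card SA.
have [r hr] : exists r, #|(X :\ z) :\ j| = (#|S| + r)%N.
  by exists (#|(X :\ z) :\ j| - #|S|)%N; rewrite subnKC.
rewrite hc1 hc2 hr add1n.
have -> : (#|S| + r).+1.+1 = (#|S| + r + 2)%N by rewrite addn2.
have -> : (#|S| + r).+1 = (#|S| + r + 1)%N by rewrite addn1.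
exact: wgt_id.
Qed.

Lemma shapley_unan_base (P : {set T}) j : j \in P -> shapley P (unan P) j = #|P|%:R^-1.
Proof.
move=> jP; rewrite /shapley (bigD1 (P :\ j)) /=; last by rewrite powersetE.
rewrite big1 ?addr0.
  rewrite /unan setD1K // subxx.
  have -> : (P \subset P :\ j) = false.
    by apply/negbTE/negP=> /subsetP /(_ j jP); rewrite !inE eqxx.
  have hc : #|P| = (#|P :\ j|).+1 by rewrite (cardsD1 j P) jP.
  rewrite hc; have -> : ((#|P :\ j|).+1 - #|P :\ j| - 1 = 0)%N by lia.
  rewrite fact0 factS mulr1 subr0 mulr1 natrM.
  rewrite invfM mulrCA mulfV ?mulr1 //.
  by rewrite pnatr_eq0 -lt0n fact_gt0.
move=> S /andP[]; rewrite powersetE => SP neS.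
rewrite /unan.
have -> : (P \subset S) = false.
  by apply/negbTE/negP=> /subsetP /(_ j jP) jS; move: (subsetP SP j jS); rewrite !inE eqxx.
have -> : (P \subset j |: S) = false.
  apply/negbTE/negP=> h; move/negP: neS; apply; rewrite eqEsubset SP /=.
  apply/subsetP=> x; rewrite !inE => /andP[xj xP]; move: (subsetP h x xP).
  by rewrite !inE (negbTE xj).
by rewrite subrr mulr0.
Qed.

Lemma shapley_unan_n n : forall (X P : {set T}) j, #|X :\: P| = n -> P \subset X -> j \in P ->
  shapley X (unan P) j = #|P|%:R^-1.
Proof.
elim: n => [|n IH] X P j hc PX jP.
  have -> : X = P.
    apply/eqP; rewrite eqEsubset PX andbT; apply/subsetP=> x xX.
    move/eqP: hc; rewrite cards_eq0 => /eqP /setP /(_ x); rewrite !inE xX andbT.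
    by case: (x \in P).
  exact: shapley_unan_base.
have : #|X :\: P| != 0%N by rewrite hc.
rewrite cards_eq0 => /set0Pn [z]; rewrite inE => /andP[zP zX].
have zj : z != j by apply: contraNneq zP => ->.
rewrite (@shapley_remove X _ j z (subsetP PX j jP) zX zj); last by move=> S; exact: unan_null.
apply: IH => //.
  have -> : (X :\ z) :\: P = (X :\: P) :\ z.
    by apply/setP=> x; rewrite !inE; case: (x == z); case: (x \in P).
  by move: hc; rewrite (cardsD1 z (X :\: P)) !inE zP zX => -[].
apply/subsetP=> x xP; rewrite !inE (subsetP PX) // andbT.
by apply: contraNneq zP => <-.
Qed.

Lemma shapley_unan (X P : {set T}) j : P \subset X -> j \in P ->
  shapley X (unan P) j = #|P|%:R^-1.
Proof. exact: (@shapley_unan_n _ X P j erefl). Qed.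

Lemma shapley_unan_nj (X P : {set T}) j : j \notin P -> shapley X (unan P) j = 0.
Proof. by move=> jP; apply: shapley_null => S; exact: unan_null. Qed.
End Shap.

Section Frame.
Variables (T : finType) (R : realFieldType) (e : rel T) (delta : R) (tl : T -> T -> seq T).
Hypothesis Hpath : forall x y, path e x (tl x y).
Hypothesis Hlast : forall x y, last x (tl x y) = y.
Hypothesis Huniq : forall x y, uniq (x :: tl x y).
Hypothesis Hself : forall x, tl x x = [::].
Hypothesis Hlip : forall x u w, e u w -> (size (tl x w) <= (size (tl x u)).+1)%N.
Hypothesis Hsym : symmetric e.
Hypothesis Hleaf : forall x y z, z \in tl x y -> z != y ->
  (forall w, e x w -> w = z) \/ (forall w, e y w -> w = z).

Lemma Hcut x y z : z \in tl x y -> z != y ->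
  exists Q : pred T, [/\ Q x, ~~ Q y & forall u w, u != z -> w != z -> e u w -> Q u -> Q w].
Proof.
move=> zt zy; have xy : x != y.
  by apply/negP=> /eqP exy; move: zt; rewrite exy Hself.
case: (Hleaf zt zy) => Hl.
  exists (pred1 x); split => //=; first by rewrite eq_sym.
  by move=> u w uz wz euw /eqP ux; move: wz; rewrite (Hl w) ?eqxx // -ux.
exists (predC1 y); split => //=; first by rewrite eqxx.
move=> u w uz wz euw _; apply/negP=> /eqP wy; move: uz.
by rewrite (Hl u) ?eqxx // -wy Hsym.
Qed.

Definition pth x y : {set T} := [set z in x :: tl x y].

Lemma path_ind (S : {set T}) x t : path e x t -> x \in S -> all (mem S) t ->
  path (indrel e S) x t.
Proof.
elim: t x => [//|y t IH] x /= /andP[exy pt] xS /andP[yS Ht].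
by rewrite /indrel exy xS yS /= IH.
Qed.

Lemma lip_walk (S : {set T}) x0 x t : path (indrel e S) x t ->
  (size (tl x0 (last x t)) <= size (tl x0 x) + size t)%N.
Proof.
elim: t x => [|y t IH] x /=; first by rewrite addn0.
case/andP=> /and3P[exy _ _] pt; apply: leq_trans (IH _ pt) _.
by rewrite addnS -addSn leq_add2r Hlip.
Qed.

Lemma walk_in (S : {set T}) x t : path (indrel e S) x t -> t != [::] ->
  (x \in S) && all (mem S) t.
Proof.
elim: t x => [//|y t IH] x /= /andP[/and3P[_ xS yS] pt] _.
rewrite xS yS /=; case: t IH pt => [//|z t] IH pt.
by case/andP: (IH y pt isT).
Qed.

Lemma walk_Q (S : {set T}) z (Q : pred T) x t :
  (forall u w, u != z -> w != z -> e u w -> Q u -> Q w) -> z \notin S ->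
  path (indrel e S) x t -> Q x -> Q (last x t).
Proof.
move=> HQ zS; elim: t x => [//|y t IH] x /= /andP[/and3P[exy xS yS] pt] Qx.
apply: IH pt _; apply: HQ exy Qx.
  by apply: contraNneq zS => <-.
by apply: contraNneq zS => <-.
Qed.

Lemma dist_tree (S : {set T}) x y : x != y ->
  dist e S x y = if pth x y \subset S then Some (size (tl x y)) else None.
Proof.
move=> xy; case: ifP => PS.
  apply: dist_some.
    apply/existsP; exists (in_tuple (tl x y)); rewrite /= Hlast eqxx andbT.
    apply: path_ind => //; first by apply: (subsetP PS); rewrite inE mem_head.
    by apply/allP=> z zt; apply: (subsetP PS); rewrite inE in_cons zt orbT.
  move=> n /existsP[t /andP[pt /eqP lt]].
  have := lip_walk x pt; rewrite lt Hself /= size_tuple; done.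
apply: dist_none => n; apply/negP => /existsP[t /andP[pt /eqP lt]].
have tn : (tval t) != [::] by apply: contra_neq xy => h; rewrite -lt h.
case/andP: (walk_in pt tn) => xS atS.
have yS : y \in S.
  rewrite -lt; case: (tval t) tn atS => // a s _ /allP Hall /=; exact: (Hall _ (mem_last a s)).
have [z zP zS] : exists2 z, z \in pth x y & z \notin S.
  by move/negbT: PS => /subsetPn[z zP zS]; exists z.
have zy : z != y by apply: contraNneq zS => ->.
have zx : z != x by apply: contraNneq zS => ->.
move: zP; rewrite inE in_cons (negbTE zx) /= => zt.
have [Q [Qx Qy HQ]] := Hcut zt zy.
by move: (walk_Q HQ zS pt Qx); rewrite lt (negbTE Qy).
Qed.

Lemma card_pth x y : #|pth x y| = (size (tl x y)).+1.
Proof. by rewrite cardsE; apply/card_uniqP; exact: Huniq. Qed.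

Lemma in_pth_l x y : x \in pth x y.
Proof. by rewrite inE mem_head. Qed.
Lemma in_pth_r x y : y \in pth x y.
Proof. by rewrite inE -{1}(Hlast x y) mem_last. Qed.

Definition tgame (C : {set T}) : R :=
  \sum_x \sum_(y | y != x) delta ^+ size (tl x y) * unan R (pth x y) C.

Lemma vG_tree C : vG e delta C = tgame C.
Proof.
rewrite /vG /tgame [LHS]big_mkcond; apply: eq_bigr => x _.
case: (boolP (x \in C)) => xC.
  rewrite big_mkcondl; apply: eq_bigr => y yx; rewrite /unan.
  rewrite dist_tree 1?eq_sym //; case: (boolP (pth x y \subset C)) => PC.
    by rewrite (subsetP PC _ (in_pth_r x y)) /= mulr1.
  by case: (y \in C); rewrite mulr0.
rewrite big1 // => y _; rewrite /unan.
case: (boolP (pth x y \subset C)) => PC; last by rewrite mulr0.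
by move: xC; rewrite (subsetP PC _ (in_pth_l x y)).
Qed.

Lemma edge_linked (Hs : {set {set T}}) (C : {set T}) :
  (forall u w, u \in C -> w \in C -> e u w -> [set u; w] \in Hs) ->
  forall u w, u \in C -> w \in C -> e u w -> linked Hs C u w.
Proof.
move=> HE u w uC wC euw; apply/orP; right.
have HC : [set u; w] \in confin Hs C.
  rewrite inE HE //=; apply/subsetP=> x; rewrite !inE => /orP[]/eqP->//.
apply/existsP; exists [set u; w]; rewrite HC; apply/existsP; exists [set u; w].
by rewrite HC !inE !eqxx orbT connect0.
Qed.

Lemma edge_in u w : e u w -> [set u; w] \in edgeset e.
Proof. by move=> euw; apply/imsetP; exists (u, w); rewrite ?inE. Qed.

Lemma bpc_tree j i : j != i ->
  bpc e delta (edgeset e) j i =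
  \sum_x \sum_(y | y != x)
     (if (i \in pth x y) && (j \in pth x y) then delta ^+ size (tl x y) / #|pth x y|%:R else 0).
Proof.
move=> ji; rewrite /bpc.
rewrite (@shapley_ext _ _ _ _ tgame); last 2 first.
- by [].
- by move=> S _; rewrite rgame_vG ?vG_tree //; apply: edge_linked => u w _ _; exact: edge_in.
rewrite (@shapley_ext _ _ _ _ tgame); last 2 first.
- by rewrite !inE ji.
- move=> S SX; rewrite rgame_vG ?vG_tree //; apply: edge_linked => u w uS wS euw.
  rewrite inE edge_in //=; apply/subsetP=> x /set2P[]->; exact: (subsetP SX).
rewrite /tgame !shapley_sum -sumrB; apply: eq_bigr => x _.
rewrite !shapley_sum -sumrB; apply: eq_bigr => y _.
rewrite !shapley_scale -mulrBr.
case: (boolP (j \in pth x y)) => jP; last by rewrite andbF !shapley_unan_nj // subrr mulr0.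
rewrite andbT (@shapley_unan _ _ [set: T]) ?subsetT //.
case: (boolP (i \in pth x y)) => iP.
  rewrite shapley_unan_out ?subr0 //; first by rewrite !inE ji.
  by apply/negP=> /subsetP /(_ i iP); rewrite !inE eqxx.
rewrite shapley_unan ?subrr ?mulr0 //.
by apply/subsetP=> z zP; rewrite !inE andbT; apply: contraNneq iP => <-.
Qed.
End Frame.

Section Tree.
Variables (k l : nat).
Local Notation V := (treeV k l).
Local Notation E := (treeE k l).

Definition ttl (x y : V) : seq V :=
 match x, y with
 | inl None, inl None => [::]
 | inl None, inl (Some _) => [:: y]
 | inl (Some _), inl None => [:: y]
 | inl (Some a), inl (Some a') => if a == a' then [::] else [:: inl None; y]
 | inl None, inr None => [:: y]
 | inl None, inr (Some _) => [:: inr None; y]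
 | inl (Some _), inr None => [:: inl None; y]
 | inl (Some _), inr (Some _) => [:: inl None; inr None; y]
 | inr None, inr None => [::]
 | inr None, inr (Some _) => [:: y]
 | inr (Some _), inr None => [:: y]
 | inr (Some b), inr (Some b') => if b == b' then [::] else [:: inr None; y]
 | inr None, inl None => [:: y]
 | inr None, inl (Some _) => [:: inl None; y]
 | inr (Some _), inl None => [:: inr None; y]
 | inr (Some _), inl (Some _) => [:: inr None; inl None; y]
 end.

Lemma tsym : symmetric E.
Proof. by case=> [[a|]|[a|]] [[b|]|[b|]]. Qed.

Lemma tpath x y : path E x (ttl x y).
Proof. by case: x => [[a|]|[a|]]; case: y => [[b|]|[b|]] //=; case: eqP. Qed.

Lemma tlast x y : last x (ttl x y) = y.
Proof. by case: x => [[a|]|[a|]]; case: y => [[b|]|[b|]] //=; case: eqP => // ->. Qed.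

Lemma tself x : ttl x x = [::].
Proof. by case: x => [[a|]|[a|]] //=; rewrite eqxx. Qed.

Lemma tuniq x y : uniq (x :: ttl x y).
Proof.
case: x => [[a|]|[a|]]; case: y => [[b|]|[b|]] //=; try case: eqP => //= ab;
 rewrite !inE /= ?andbT //.
all: by apply/eqP; case.
Qed.

Lemma tleaf x y z : z \in ttl x y -> z != y ->
  (forall w, E x w -> w = z) \/ (forall w, E y w -> w = z).
Proof.
case: z => [[c|]|[c|]]; case: x => [[a|]|[a|]]; case: y => [[b|]|[b|]]; rewrite /= ?inE;
 repeat (case: eqP => //= ?);
 try (by left; case=> [[?|]|[?|]]); try (by right; case=> [[?|]|[?|]]).
all: by rewrite !inE /= => /eqP.
Qed.

Lemma tlip x u w : E u w -> (size (ttl x w) <= (size (ttl x u)).+1)%N.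
Proof.
case: x => [[a|]|[a|]]; case: u => [[b|]|[b|]]; case: w => [[c|]|[c|]] //=;
 repeat (case: eqP => //= ?).
Qed.

Lemma sum_tree (R : realFieldType) (F : V -> R) : \sum_x F x =
  F (inl None) + \sum_(a : 'I_k) F (inl (Some a)) + (F (inr None) + \sum_(b : 'I_l) F (inr (Some b))).
Proof. by rewrite big_sumType /= !big_option. Qed.

Lemma eq_inlS (a b : 'I_k) : (inl (Some a) == inl (Some b) :> V) = (a == b).
Proof. by apply/eqP/eqP => [[]|->]. Qed.
Lemma eq_inrS (a b : 'I_l) : (inr (Some a) == inr (Some b) :> V) = (a == b).
Proof. by apply/eqP/eqP => [[]|->]. Qed.

Variables (R : realFieldType) (delta : R).
Lemma sum_tree2 (F : V -> V -> R) : \sum_x \sum_y F x y =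
  (F (inl None) (inl None) + \sum_(a : 'I_k) F (inl None) (inl (Some a)) +
   (F (inl None) (inr None) + \sum_(b : 'I_l) F (inl None) (inr (Some b)))) +
  \sum_(a0 : 'I_k) (F (inl (Some a0)) (inl None) + \sum_(a : 'I_k) F (inl (Some a0)) (inl (Some a)) +
   (F (inl (Some a0)) (inr None) + \sum_(b : 'I_l) F (inl (Some a0)) (inr (Some b)))) +
  ((F (inr None) (inl None) + \sum_(a : 'I_k) F (inr None) (inl (Some a)) +
   (F (inr None) (inr None) + \sum_(b : 'I_l) F (inr None) (inr (Some b)))) +
  \sum_(b0 : 'I_l) (F (inr (Some b0)) (inl None) + \sum_(a : 'I_k) F (inr (Some b0)) (inl (Some a)) +
   (F (inr (Some b0)) (inr None) + \sum_(b : 'I_l) F (inr (Some b0)) (inr (Some b))))).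
Proof.
rewrite sum_tree !sum_tree; congr (_ + _ + (_ + _)).
  by apply: eq_bigr => a _; rewrite sum_tree.
by apply: eq_bigr => a _; rewrite sum_tree.
Qed.

Definition tb j i := bpc E delta (edgeset E) j i.

Lemma tb_formula j i : j != i -> tb j i =
  \sum_x \sum_y (if (y != x) && (i \in x :: ttl x y) && (j \in x :: ttl x y) then
     delta ^+ size (ttl x y) / (size (ttl x y)).+1%:R else 0).
Proof.
move=> ji; rewrite /tb (bpc_tree delta tpath tlast tself tlip tsym tleaf) //.
apply: eq_bigr => x _; rewrite big_mkcond; apply: eq_bigr => y _.
rewrite /pth !inE card_pth //; first by case: (y != x).
exact: tuniq.
Qed.

Lemma sum_ifl (I : finType) (b : bool) (F : I -> R) :
  \sum_i (if b then F i else 0) = if b then \sum_i F i else 0.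
Proof. by case: b => //; rewrite big1. Qed.

Lemma sum_eq1 (I : finType) (i0 : I) (F : I -> R) :
  \sum_i (if i == i0 then F i else 0) = F i0.
Proof. by rewrite -big_mkcond big_pred1_eq. Qed.

Lemma sum_0 (I : finType) : \sum_(i : I) (0 : R) = 0.
Proof. by rewrite big1. Qed.

Definition g3 (a : 'I_k) (b : 'I_l) (x y : V) : R :=
  match x, y with
  | inl (Some a'), inr (Some b') => if a' == a then (if b' == b then delta ^+ 3 / 4%:R else 0) else 0
  | inr (Some b'), inl (Some a') => if b' == b then (if a' == a then delta ^+ 3 / 4%:R else 0) else 0
  | _, _ => 0
  end.

Lemma summand3 (a : 'I_k) (b : 'I_l) x y :
  (if (y != x) && (inr (Some b) \in x :: ttl x y) && (inl (Some a) \in x :: ttl x y) then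
     delta ^+ size (ttl x y) / (size (ttl x y)).+1%:R else 0) = g3 a b x y.
Proof.
case: x => [[a1|]|[a1|]]; case: y => [[b1|]|[b1|]]; rewrite /= ?inE /= ?inE /= ?eq_inlS ?eq_inrS //=;
 repeat (case: eqP => //= ?); try congruence;
 rewrite ?inE /= ?andbF //.
Qed.

Lemma tb_ab (a : 'I_k) (b : 'I_l) : tb (inl (Some a)) (inr (Some b)) = 2%:R^-1 * delta ^+ 3.
Proof.
rewrite tb_formula //.
rewrite (eq_bigr (fun x => \sum_y g3 a b x y)); last first.
  by move=> x _; apply: eq_bigr => y _; exact: summand3.
rewrite sum_tree2 /= !sum_0 ?add0r ?addr0.
under eq_bigr => a' _ do rewrite sum_ifl sum_eq1 ?add0r ?addr0.
under [X in _ + X]eq_bigr => b' _ do rewrite sum_ifl sum_eq1 ?add0r ?addr0.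
rewrite !sum_eq1.
by field.
Qed.

Lemma sum_const_ord n (c : R) : \sum_(i < n) c = c * n%:R.
Proof. by rewrite sumr_const card_ord mulr_natr. Qed.

Definition g1 (x y : V) : R :=
  match x, y with
  | inl None, inr None => delta ^+ 1 / 2%:R
  | inl None, inr (Some _) => delta ^+ 2 / 3%:R
  | inl (Some _), inr None => delta ^+ 2 / 3%:R
  | inl (Some _), inr (Some _) => delta ^+ 3 / 4%:R
  | inr None, inl None => delta ^+ 1 / 2%:R
  | inr None, inl (Some _) => delta ^+ 2 / 3%:R
  | inr (Some _), inl None => delta ^+ 2 / 3%:R
  | inr (Some _), inl (Some _) => delta ^+ 3 / 4%:R
  | _, _ => 0
  end.

Lemma summand1 x y :
  (if (y != x) && (inr None \in x :: ttl x y) && (inl None \in x :: ttl x y) then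
     delta ^+ size (ttl x y) / (size (ttl x y)).+1%:R else 0) = g1 x y.
Proof.
case: x => [[a1|]|[a1|]]; case: y => [[b1|]|[b1|]]; rewrite /= ?inE /= ?inE /= ?eq_inlS ?eq_inrS //=;
 repeat (case: eqP => //= ?); try congruence;
 rewrite ?inE /= ?andbF //.
Qed.

Lemma tb_hkhl : tb (inl None) (inr None) =
  delta + 2%:R / 3%:R * (k + l)%:R * delta ^+ 2 + (k * l)%:R / 2%:R * delta ^+ 3.
Proof.
rewrite tb_formula //.
rewrite (eq_bigr (fun x => \sum_y g1 x y)); last first.
  by move=> x _; apply: eq_bigr => y _; exact: summand1.
rewrite sum_tree2 /= !sum_0 ?add0r ?addr0 !sum_const_ord.
rewrite natrD natrM expr1.
Time by field.
Qed.

Lemma sum_neq (I : finType) (a : I) (c : R) :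
  \sum_i (if i == a then 0 else c) = c * (#|I|.-1)%:R.
Proof.
rewrite (bigD1 a) //= eqxx add0r.
rewrite (eq_bigr (fun _ => c)); last by move=> i /negbTE ->.
by rewrite sumr_const cardC1 mulr_natr.
Qed.

Definition g2 (a : 'I_k) (x y : V) : R :=
  match x, y with
  | inl None, inl (Some a2) => if a2 == a then delta ^+ 1 / 2%:R else 0
  | inl (Some a1), inl None => if a1 == a then delta ^+ 1 / 2%:R else 0
  | inl (Some a1), inl (Some a2) => if a1 == a then (if a2 == a then 0 else delta ^+ 2 / 3%:R)
                                    else (if a2 == a then delta ^+ 2 / 3%:R else 0)
  | inl (Some a1), inr None => if a1 == a then delta ^+ 2 / 3%:R else 0
  | inl (Some a1), inr (Some _) => if a1 == a then delta ^+ 3 / 4%:R else 0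
  | inr None, inl (Some a2) => if a2 == a then delta ^+ 2 / 3%:R else 0
  | inr (Some _), inl (Some a2) => if a2 == a then delta ^+ 3 / 4%:R else 0
  | _, _ => 0
  end.

Lemma summand2 (a : 'I_k) x y :
  (if (y != x) && (inl (Some a) \in x :: ttl x y) && (inl None \in x :: ttl x y) then
     delta ^+ size (ttl x y) / (size (ttl x y)).+1%:R else 0) = g2 a x y.
Proof.
case: x => [[a1|]|[a1|]]; case: y => [[b1|]|[b1|]]; rewrite /= ?inE /= ?inE /= ?eq_inlS ?eq_inrS //=;
 repeat (case: eqP => //= ?); try congruence;
 rewrite ?inE /= ?andbF ?eq_inlS //;
 case: eqP => //=; congruence.
Qed.

Lemma tb_hka (a : 'I_k) : tb (inl None) (inl (Some a)) =
  delta + (2 * k)%:R / 3%:R * delta ^+ 2 + l%:R / 2%:R * delta ^+ 3.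
Proof.
rewrite tb_formula //.
rewrite (eq_bigr (fun x => \sum_y g2 a x y)); last first.
  by move=> x _; apply: eq_bigr => y _; exact: summand2.
rewrite sum_tree2 /= !sum_0 ?add0r ?addr0 !sum_eq1.
rewrite (bigD1 a) //= eqxx sum_neq !sum_const_ord.
rewrite (eq_bigr (fun _ => delta ^+ 2 / 3%:R)); last first.
  by move=> i /negbTE ->; rewrite sum_eq1 sum_0 ?add0r ?addr0.
rewrite sumr_const cardC1 card_ord -(mulr_natr (delta ^+ 2 / 3%:R) k.-1).
have hk : (k.-1)%:R = k%:R - 1 :> R.
  by rewrite -subn1 natrB //; case: (k) a => [[]|].
rewrite hk (natrM _ 2 k) expr1.
by field.
Qed.
End Tree.

Section Star.
Variables (m : nat).
Local Notation V := (starV m).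
Local Notation E := (starE m).

Definition stl (x y : V) : seq V :=
 match x, y with
 | None, None => [::]
 | None, Some _ => [:: y]
 | Some _, None => [:: y]
 | Some a, Some b => if a == b then [::] else [:: None; y]
 end.

Lemma ssym : symmetric E.
Proof. by case=> [a|] [b|]. Qed.

Lemma spath x y : path E x (stl x y).
Proof. by case: x => [a|]; case: y => [b|] //=; case: eqP. Qed.

Lemma slast x y : last x (stl x y) = y.
Proof. by case: x => [a|]; case: y => [b|] //=; case: eqP => // ->. Qed.

Lemma sself x : stl x x = [::].
Proof. by case: x => [a|] //=; rewrite eqxx. Qed.

Lemma suniq x y : uniq (x :: stl x y).
Proof.
case: x => [a|]; case: y => [b|] //=; try case: eqP => //= ab;
 rewrite !inE /= ?andbT //.
all: by apply/eqP; case.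
Qed.

Lemma sleaf x y z : z \in stl x y -> z != y ->
  (forall w, E x w -> w = z) \/ (forall w, E y w -> w = z).
Proof.
case: z => [c|]; case: x => [a|]; case: y => [b|]; rewrite /= ?inE;
 repeat (case: eqP => //= ?);
 try (by left; case=> [?|]); try (by right; case=> [?|]).
all: by rewrite !inE /= => /eqP.
Qed.

Lemma slip x u w : E u w -> (size (stl x w) <= (size (stl x u)).+1)%N.
Proof.
case: x => [a|]; case: u => [b|]; case: w => [c|] //=;
 repeat (case: eqP => //= ?).
Qed.

Lemma sum_star (R : realFieldType) (F : V -> R) : \sum_x F x = F None + \sum_(a : 'I_m) F (Some a).
Proof. by rewrite big_option. Qed.

Lemma eq_S (a b : 'I_m) : (Some a == Some b :> V) = (a == b).
Proof. by apply/eqP/eqP => [[]|->]. Qed.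

Variables (R : realFieldType) (delta : R).

Lemma sb_formula j i : j != i -> bpc E delta (edgeset E) j i =
  \sum_x \sum_y (if (y != x) && (i \in x :: stl x y) && (j \in x :: stl x y) then
     delta ^+ size (stl x y) / (size (stl x y)).+1%:R else 0).
Proof.
move=> ji; rewrite (bpc_tree delta spath slast sself slip ssym sleaf) //.
apply: eq_bigr => x _; rewrite big_mkcond; apply: eq_bigr => y _.
rewrite /pth !inE card_pth //; first by case: (y != x).
exact: suniq.
Qed.

Definition gs (c : 'I_m) (x y : V) : R :=
  match x, y with
  | None, Some b => if b == c then delta ^+ 1 / 2%:R else 0
  | Some a, None => if a == c then delta ^+ 1 / 2%:R else 0
  | Some a, Some b => if a == c then (if b == c then 0 else delta ^+ 2 / 3%:R)
                      else (if b == c then delta ^+ 2 / 3%:R else 0)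
  | _, _ => 0
  end.

Lemma summands (c : 'I_m) x y :
  (if (y != x) && (Some c \in x :: stl x y) && (None \in x :: stl x y) then
     delta ^+ size (stl x y) / (size (stl x y)).+1%:R else 0) = gs c x y.
Proof.
case: x => [a1|]; case: y => [b1|]; rewrite /= ?inE /= ?inE /= ?eq_S //=;
 repeat (case: eqP => //= ?); try congruence;
 rewrite ?inE /= ?andbF ?eq_S //;
 case: eqP => //=; congruence.
Qed.

Lemma sb_hc (c : 'I_m) : bpc E delta (edgeset E) None (Some c) =
  delta + 2%:R / 3%:R * (m.-1)%:R * delta ^+ 2.
Proof.
rewrite sb_formula //.
rewrite (eq_bigr (fun x => \sum_y gs c x y)); last first.
  by move=> x _; apply: eq_bigr => y _; exact: summands.
rewrite sum_star /= sum_star /= add0r sum_eq1.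
under eq_bigr => a _ do rewrite sum_star /=.
rewrite (bigD1 c) //= eqxx sum_neq card_ord.
rewrite (eq_bigr (fun _ => delta ^+ 2 / 3%:R)); last first.
  by move=> i /negbTE ->; rewrite sum_eq1 add0r.
rewrite sumr_const cardC1 card_ord -(mulr_natr (delta ^+ 2 / 3%:R) m.-1) expr1.
by field.
Qed.
End Star.

Lemma betaN_anti (R : realFieldType) p q : (1 <= p)%N -> (p <= q)%N -> betaN R q <= betaN R p.
Proof.
move=> p1 pq; have q1 := leq_trans p1 pq.
rewrite /betaN lef_pV2; last 2 first.
- by rewrite posrE ltr0n !muln_gt0 q1.
- by rewrite posrE ltr0n !muln_gt0 p1.
by rewrite ler_nat leq_mul // leq_mul.
Qed.

Lemma isN_mono (R : realFieldType) (b1 b2 : R) N1 N2 : b1 < b2 -> isN b1 N1 -> isN b2 N2 -> (N2 <= N1)%N.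
Proof.
move=> lt [N11 [hb1 _]] [N21 [_ hb2]].
rewrite leqNgt; apply/negP => lt12.
case: hb2 => [h|h]; first by move: lt12; rewrite h ltnS leqNgt N11.
have : betaN R N2.-1 <= betaN R N1.
  apply: betaN_anti => //; by rewrite -ltnS prednK // (leq_trans N11 (ltnW lt12)).
move=> hle; have h2 : b2 < b1 := lt_le_trans h (le_trans hle hb1).
by move: (lt_trans lt h2); rewrite ltxx.
Qed.

Lemma ineq1 (R : realFieldType) (d X L : R) : 0 < d -> 0 <= X -> 1 <= L ->
  2^-1 * d ^+ 3 < d + X + L / 2 * d ^+ 3.
Proof.
move=> d0 X0 L1.
have d3 : 0 <= d ^+ 3 by rewrite exprn_ge0 // ltW.
have C : 2^-1 * d ^+ 3 <= L / 2 * d ^+ 3.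
  by apply: ler_wpM2r => //; lra.
lra.
Qed.

Unset Implicit Arguments.
Theorem mainTheorem10 (R : realFieldType) (k l : nat) (delta : R) :
  (1 <= k)%N -> (1 <= l)%N -> 0 < delta < 1 ->
  forall (a : 'I_k) (b : 'I_l) (c : 'I_(k + l + 1)),
  let bT := bpc (treeE k l) delta (edgeset (treeE k l)) in
  let bS := bpc (starE (k + l + 1)) delta (edgeset (starE (k + l + 1))) in
  let hk : treeV k l := inl None in
  let hl : treeV k l := inr None in
  let va : treeV k l := inl (Some a) in
  let vb : treeV k l := inr (Some b) in
  let hm : starV (k + l + 1) := None in
  let vc : starV (k + l + 1) := Some c in
  [/\ bT hk hl = delta + 2%:R / 3%:R * (k + l)%:R * delta ^+ 2
                 + (k * l)%:R / 2%:R * delta ^+ 3,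
      bS hm vc = delta + 2%:R / 3%:R * (k + l)%:R * delta ^+ 2,
      bT hk va = delta + (2 * k)%:R / 3%:R * delta ^+ 2
                 + l%:R / 2%:R * delta ^+ 3,
      bT va vb = 2%:R^-1 * delta ^+ 3 &
      [/\ bS hm vc < bT hk hl, bT va vb < bT hk va, bT va vb < bT hk hl,
          (forall N1 N2 : nat, isN (bT va vb) N1 -> isN (bT hk va) N2 -> (N2 <= N1)%N) &
          (forall N1 N2 : nat, isN (bT va vb) N1 -> isN (bT hk hl) N2 -> (N2 <= N1)%N)]].
Proof.
move=> k1 l1 /andP[d0 d1] a b c bT bS hk hl va vb hm vc.
have e1 : bT hk hl = delta + 2%:R / 3%:R * (k + l)%:R * delta ^+ 2
                 + (k * l)%:R / 2%:R * delta ^+ 3 := tb_hkhl k l delta.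
have e2 : bS hm vc = delta + 2%:R / 3%:R * (k + l)%:R * delta ^+ 2.
  have hm1 : (k + l + 1).-1 = (k + l)%N by rewrite addn1.
  by have := sb_hc delta c; rewrite hm1.
have e3 : bT hk va = delta + (2 * k)%:R / 3%:R * delta ^+ 2
                 + l%:R / 2%:R * delta ^+ 3 := @tb_hka k l R delta a.
have e4 : bT va vb = 2%:R^-1 * delta ^+ 3 := @tb_ab k l R delta a b.
have d2 : 0 <= delta ^+ 2 by rewrite exprn_ge0 // ltW.
have i3' : 0 <= 3%:R^-1 :> R by rewrite invr_ge0 ler0n.
have X1 : 0 <= 2%:R / 3%:R * (k + l)%:R * delta ^+ 2.
  apply: mulr_ge0 d2; apply: mulr_ge0 (ler0n _ _); exact: mulr_ge0 (ler0n _ _) i3'.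
have X2 : 0 <= (2 * k)%:R / 3%:R * delta ^+ 2.
  apply: mulr_ge0 d2; exact: mulr_ge0 (ler0n _ _) i3'.
have L1 : 1 <= l%:R :> R by rewrite ler1n.
have KL1 : 1 <= (k * l)%:R :> R by rewrite ler1n muln_gt0 k1 l1.
have i2 : bT va vb < bT hk va by rewrite e4 e3; exact: (ineq1 d0 X2 L1).
have i3 : bT va vb < bT hk hl by rewrite e4 e1; exact: (ineq1 d0 X1 KL1).
split; [exact: e1 | exact: e2 | exact: e3 | exact: e4 | split].
- rewrite e1 e2 ltrDl; apply: mulr_gt0; last exact: exprn_gt0.
  by apply: divr_gt0; rewrite ltr0n ?muln_gt0 ?k1.
- exact: i2.
- exact: i3.
- by move=> N1 N2; apply: isN_mono.
- by move=> N1 N2; apply: isN_mono.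
Qed.
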